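(* Let $G$ be a chordal graph and let $\mathcal{H}'=(V',\mathcal{E}')$ be a Berge-acyclic subhypergraph of $\mathcal{H}(G)$. If $F_1,\dots,F_k$ are the connected components of $G[\mathcal{E}']$, then each $F_i$ is a cactus and every cycle of each $F_i$ is a $3$-cycle.
   Context: All graphs are finite, simple and undirected. A graph is chordal if it has no induced cycle of length greater than $3$. A cactus is a connected graph in which every edge lies in at most one cycle. A hypergraph is a pair $(V,\mathcal{E})$ with $V$ finite and $\mathcal{E}$ a set of nonempty subsets of $V$; a subhypergraph $(V',\mathcal{E}')$ has $V'\subseteq V$, $\mathcal{E}'\subseteq\mathcal{E}$. A Berge-cycle is a sequence $(E_1,x_1,\dots,E_n,x_n)$, $n\ge 2$, of distinct hyperedges $E_i$ and distinct vertices $x_i$ with $x_i\in E_i\cap E_{i+1}$ for all $i$ (indices mod $n$); a hypergraph is Berge-acyclic if it has no Berge-cycle. For a graph $G=(V,E)$, $\mathcal{H}(G)=(V,\mathcal{E})$ is the hypergraph whose hyperedges are exactly the $3$-element vertex sets inducing a triangle in $G$. For $\mathcal{E}'\subseteq\mathcal{E}$, $G[\mathcal{E}']$ is the graph whose vertices are the vertices occurring in hyperedges of $\mathcal{E}'$ and in which $u,v$ are adjacent iff $\{u,v\}\subseteq e$ for some $e\in\mathcal{E}'$. *)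

(* Defs.v *)
From mathcomp Require Import all_boot.
Set Implicit Arguments. Unset Strict Implicit. Unset Printing Implicit Defensive.

Section Defs.
Variable T : finType.

Definition simple_graph (e : rel T) : Prop := symmetric e /\ irreflexive e.

Definition long_induced_cycle (e : rel T) (s : seq T) : bool :=
  [&& uniq s, 4 <= size s, cycle e s &
      all (fun x => all (fun y => e x y ==> ((next s x == y) || (prev s x == y))) s) s].

Definition chordal (e : rel T) : Prop := forall s : seq T, ~~ long_induced_cycle e s.

Definition triangle (e : rel T) (A : {set T}) : bool :=
  (#|A| == 3) && [forall x in A, forall y in A, (x != y) ==> e x y].

Definition tri_hyperedges (e : rel T) : {set {set T}} := [set A | triangle e A].

Definition sub_hypergraph_H (e : rel T) (V' : {set T}) (E' : {set {set T}}) : Prop :=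
  E' \subset tri_hyperedges e /\ (forall A, A \in E' -> A \subset V').

(* Berge-cycle (E_1,x_1,...,E_n,x_n), n >= 2, given as Es = [E_1..E_n], xs = [x_1..x_n]
   (indices mod n); the default x0 of nth is irrelevant since i < size xs *)
Definition berge_cycle (E' : {set {set T}}) (Es : seq {set T}) (xs : seq T) : Prop :=
  [/\ 2 <= size Es, size xs = size Es, uniq Es & uniq xs] /\
  all (fun A => A \in E') Es /\ (
      forall (i : nat) (x0 : T), i < size Es ->
        (nth x0 xs i \in nth set0 Es i) /\
        (nth x0 xs i \in nth set0 Es (i.+1 %% size Es))).

Definition berge_acyclic (E' : {set {set T}}) : Prop :=
  forall Es xs, ~ berge_cycle E' Es xs.

Definition GE_vertices (E' : {set {set T}}) : {set T} := \bigcup_(A in E') A.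
Definition GE_adj (E' : {set {set T}}) : rel T :=
  fun u v => (u != v) && [exists A in E', (u \in A) && (v \in A)].

(* graphs given by a vertex set V and an adjacency r (only used inside V) *)
Definition restr (V : {set T}) (r : rel T) : rel T :=
  fun u v => [&& u \in V, v \in V & r u v].

(* connected component of x in (V, r), as a vertex set; its edges are those of r *)
Definition component (V : {set T}) (r : rel T) (x : T) : {set T} :=
  [set y in V | connect (restr V r) x y].

Definition is_cycle (V : {set T}) (r : rel T) (s : seq T) : bool :=
  [&& uniq s, 3 <= size s, all (fun x => x \in V) s & cycle r s].

Definition cycle_edges (s : seq T) : {set {set T}} := [set [set x; next s x] | x in s].

Definition connected_graph (V : {set T}) (r : rel T) : Prop :=
  forall x y, x \in V -> y \in V -> connect (restr V r) x y.

Definition cactus (V : {set T}) (r : rel T) : Prop :=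
  connected_graph V r /\
  forall (u v : T) (s1 s2 : seq T),
    u \in V -> v \in V -> r u v ->
    is_cycle V r s1 -> is_cycle V r s2 ->
    [set u; v] \in cycle_edges s1 -> [set u; v] \in cycle_edges s2 ->
    cycle_edges s1 = cycle_edges s2.
End Defs.

(* Main.v *)
Require Import Defs.
From mathcomp Require Import all_boot.
Set Implicit Arguments. Unset Strict Implicit. Unset Printing Implicit Defensive.

Definition wrel (T : finType) : rel ({set T} * T) := fun a b => a.2 \in b.1.

Definition walkp (T : finType) (E' : {set {set T}}) (p : seq ({set T} * T)) : bool :=
  [&& cycle (@wrel T) p, all (fun a : {set T} * T => a.2 \in a.1) p,
      all (fun a : {set T} * T => a.1 \in E') p & uniq (map (fun a : {set T} * T => a.2) p)].

Lemma cycle_nth (X : Type) (r : rel X) (p : seq X) d i :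
  cycle r p -> i < size p -> r (nth d p i) (nth d p (i.+1 %% size p)).
Proof.
case: p => [|a p'] //= Hc Hi.
move/(pathP d): Hc => /(_ i); rewrite size_rcons => /(_ Hi).
rewrite -rcons_cons !nth_rcons /= Hi.
rewrite ltnS in Hi.
case: (ltnP i (size p')) => H.
  by rewrite modn_small.
have Ei : i = size p' by apply/eqP; rewrite eqn_leq Hi H.
by rewrite Ei eqxx modnn.
Qed.

Lemma walk_berge (T : finType) (E' : {set {set T}}) p :
  walkp E' p -> 2 <= size p -> uniq (map (fun a : {set T} * T => a.1) p) ->
  berge_cycle E' (map (fun a : {set T} * T => a.1) p) (map (fun a : {set T} * T => a.2) p).
Proof.
case/and4P=> Hc Hin HE Hu H2 Hu1.
split; first by rewrite !size_map.
split; first by rewrite all_map.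
move=> i x0; rewrite size_map => Hi.
have d : {set T} * T := (set0, x0).
rewrite !(nth_map (set0, x0)) //; last by rewrite ltn_mod; case: (p) H2.
split; first by move/allP: Hin; apply; apply: mem_nth.
exact: (cycle_nth (set0, x0) Hc Hi).
Qed.

Lemma walk_split (T : finType) (s : seq ({set T} * T)) d k :
  0 < k < size s -> (nth d s 0).1 = (nth d s k).1 ->
  cycle (@wrel T) s -> cycle (@wrel T) (take k s) && cycle (@wrel T) (drop k s).
Proof.
case/andP=> Hk Hks Heq.
have Hq : nth d (take k s) 0 = nth d s 0 by rewrite nth_take.
have Hr : nth d (drop k s) 0 = nth d s k by rewrite nth_drop addn0.
rewrite -[in cycle _ s](cat_take_drop k s).
have Sq : size (take k s) = k by rewrite size_take Hks.
have Sr : size (drop k s) = size s - k by rewrite size_drop.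
move: Hq Hr Sq Sr.
case: (take k s) => [|c q']; first by move=> _ _ Ek; rewrite -Ek in Hk.
case: (drop k s) => [|c' r'].
  by move=> _ _ _ /esym/eqP; rewrite subn_eq0 leqNgt Hks.
rewrite /= => -> -> _ _.
rewrite rcons_cat cat_path /= !rcons_path.
rewrite /wrel -Heq.
case/and4P=> -> -> -> ->; by [].
Qed.

Lemma walk_const (T : finType) (E' : {set {set T}}) :
  berge_acyclic E' -> forall n (p : seq ({set T} * T)), size p <= n -> walkp E' p ->
  {in p &, forall a b, a.1 = b.1}.
Proof.
move=> HB; elim=> [|n IH] p Hs Hw.
  by case: p Hs Hw.
have [Hle|Hgt] := leqP (size p) 1.
  case: p Hle {Hs Hw} => [|c [|c' p']] //= _ a b.
  by rewrite !inE => /eqP -> /eqP ->.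
have [Hu|Hnu] := boolP (uniq (map (fun a : {set T} * T => a.1) p)).
  by case: (HB _ _ (walk_berge Hw Hgt Hu)).
case/(uniqPn set0): Hnu => i [j [Hij]]; rewrite size_map => Hj.
have [d _] : exists d : {set T} * T, true by case E: p Hgt => [|a q] //= _; exists a.
rewrite !(nth_map d) //; last exact: ltn_trans Hj.
move=> Heq.
pose p2 := rot i p.
have Hi : i < size p by exact: ltn_trans Hj.
have S2 : size p2 = size p by rewrite size_rot.
have N0 : nth d p2 0 = nth d p i.
  by rewrite /p2 /rot nth_cat size_drop subn_gt0 Hi nth_drop addn0.
pose k := j - i.
have Hk : 0 < k < size p2.
  rewrite subn_gt0 Hij S2 /=.  by apply: leq_ltn_trans Hj; apply: leq_subr.
have Nk : nth d p2 k = nth d p j.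
  rewrite /p2 /rot nth_cat size_drop ltn_sub2r // nth_drop /k subnKC //.
  exact: ltnW.
case/and4P: Hw => Hc Hin HE Hu.
have Hc2 : cycle (@wrel T) p2 by rewrite rot_cycle.
have := @walk_split T p2 d k Hk; rewrite N0 Nk => /(_ Heq Hc2) /andP [Hcq Hcr].
have Hp2 : p2 = take k p2 ++ drop k p2 by rewrite cat_take_drop.
have Hin2 : all (fun a : {set T} * T => a.2 \in a.1) p2 by rewrite (perm_all _ (etrans (perm_rot i p p) (perm_refl p))).
have HE2 : all (fun a : {set T} * T => a.1 \in E') p2 by rewrite (perm_all _ (etrans (perm_rot i p p) (perm_refl p))).
have Hu2 : uniq (map (fun a : {set T} * T => a.2) p2) by rewrite map_rot rot_uniq.
move: Hin2 HE2 Hu2; rewrite Hp2 !all_cat map_cat cat_uniq.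
case/andP=> Hinq Hinr /andP [HEq HEr] /and3P [Huq _ Hur].
have Sq : size (take k p2) = k by rewrite size_take; case/andP: Hk => _ ->.
have Sr : size (drop k p2) = size p2 - k by rewrite size_drop.
have IHq := IH (take k p2).
have IHr := IH (drop k p2).
have Hq : {in take k p2 &, forall a b : {set T} * T, a.1 = b.1}.
  apply: IHq; last by rewrite /walkp Hcq Hinq HEq Huq.
  rewrite Sq -ltnS; apply: leq_trans Hs; rewrite -S2; by case/andP: Hk.
have Hr : {in drop k p2 &, forall a b : {set T} * T, a.1 = b.1}.
  apply: IHr; last by rewrite /walkp Hcr Hinr HEr Hur.
  rewrite Sr -ltnS; apply: leq_trans Hs; rewrite -S2.
  case/andP: Hk => Hk0 Hk1; rewrite ltn_subrL Hk0; exact: ltn_trans Hk1.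
have Mq : nth d p2 0 \in take k p2.
  by rewrite -(nth_take d (n0:=k)) ?mem_nth // ?Sq; case/andP: Hk.
have Mr : nth d p2 k \in drop k p2.
  rewrite -[k in nth d p2 k]addn0 -nth_drop mem_nth // Sr subn_gt0; by case/andP: Hk.
have key : forall a, a \in p -> a.1 = (nth d p2 0).1.
  move=> a Ha; have : a \in take k p2 ++ drop k p2 by rewrite -Hp2 mem_rot.
  rewrite mem_cat => /orP [Ha'|Ha'].
    exact: Hq.
  by rewrite N0 Heq -Nk; apply: Hr.
by move=> a b Ha Hb; rewrite (key a Ha) (key b Hb).
Qed.

Lemma cycle_in_edge (T : finType) (E' : {set {set T}}) (s : seq T) :
  berge_acyclic E' -> uniq s -> s != [::] -> cycle (GE_adj E') s ->
  exists2 A, A \in E' & {subset s <= A}.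
Proof.
move=> HB Hu Hne Hc.
pose f u := odflt set0 [pick A in E' | (u \in A) && (next s u \in A)].
have Hf : forall u, u \in s -> [/\ f u \in E', u \in f u & next s u \in f u].
  move=> u Hus; have := next_cycle Hc Hus; case/andP=> _ /existsP [A /andP [HA HuA]].
  rewrite /f; case: pickP => [B /andP [HB' /andP [H1 H2]] | H] /=; first by [].
  by move: (H A); rewrite HA HuA.
pose p := map (fun u => (f u, next s u)) s.
have Hw : walkp E' p.
  apply/and4P; split.
  - rewrite cycle_map; apply: (cycle_from_next Hu) => u Hus /=.
    rewrite /wrel /=; have Hn : next s u \in s by rewrite mem_next.
    by case: (Hf _ Hn).
  - by apply/allP => a /mapP [u Hus ->] /=; case: (Hf _ Hus).
  - by apply/allP => a /mapP [u Hus ->] /=; case: (Hf _ Hus).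
  - rewrite -map_comp; rewrite map_inj_uniq //.
    exact: (can_inj (prev_next Hu)).
have Hk := walk_const HB (leqnn (size p)) Hw.
have [a0 Ha0] : exists a0, a0 \in s by case: (s) Hne => [|a q] // _; exists a; exact: mem_head.
exists (f a0); first by case: (Hf a0 Ha0).
move=> u Hus.
have H := Hk (f u, next s u) (f a0, next s a0).
rewrite /= in H; rewrite -H; first by case: (Hf u Hus).
  by apply/mapP; exists u.
by apply/mapP; exists a0.
Qed.
Lemma edges3 (T : finType) (s : seq T) : uniq s -> size s = 3 ->
  cycle_edges s = [set B : {set T} | (B \subset [set x in s]) && (#|B| == 2)].
Proof.
case: s => [|a [|b [|c [|]]]] //= Hu _.
move: Hu; rewrite !inE negb_or andbT => /andP [/andP [Hab Hac] Hbc].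
have Nab : (b == a) = false by rewrite eq_sym (negbTE Hab).
have Nac : (c == a) = false by rewrite eq_sym (negbTE Hac).
have Nbc : (c == b) = false by rewrite eq_sym (negbTE Hbc).
have Na : next [:: a; b; c] a = b by rewrite /next /= eqxx.
have Nb : next [:: a; b; c] b = c by rewrite /next /= Nab eqxx.
have Nc : next [:: a; b; c] c = a by rewrite /next /= Nac Nbc eqxx.
apply/setP => B; rewrite inE; apply/imsetP/andP.
- case=> x; rewrite !inE => /or3P [] /eqP -> ->; rewrite ?Na ?Nb ?Nc cards2 ?(negbTE Hab) ?(negbTE Hac) ?(negbTE Hbc) ?Nac ?Nbc ?Nab;
  split => //; apply/subsetP => y; rewrite !inE => /orP [] /eqP ->; rewrite ?eqxx ?orbT //.
- case=> Hs /cards2P [y [z [Hyz EB]]].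
  have Hy : y \in B by rewrite EB !inE eqxx.
  have Hz : z \in B by rewrite EB !inE eqxx orbT.
  move: (subsetP Hs y Hy) (subsetP Hs z Hz); rewrite !inE => Hy' Hz'.
  case/or3P: Hy' Hyz EB => /eqP ->; case/or3P: Hz' => /eqP -> Hne ->; rewrite ?eqxx in Hne => //.
  all: try by exists a; rewrite ?inE ?eqxx ?Na // setUC.
  all: try by exists b; rewrite ?inE ?eqxx ?orbT ?Nb // setUC.
  all: try by exists c; rewrite ?inE ?eqxx ?orbT ?Nc // setUC.
  Qed.

Lemma cyc3 (T : finType) (e : rel T) (V' : {set T}) (E' : {set {set T}}) V s :
  sub_hypergraph_H e V' E' -> berge_acyclic E' -> is_cycle V (GE_adj E') s ->
  size s = 3 /\ exists2 A, A \in E' & [set x in s] = A.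
Proof.
move=> [Hsub _] HB /and4P [Hu H3 _ Hc].
have Hne : s != [::] by case: (s) H3.
case: (cycle_in_edge HB Hu Hne Hc) => A HA HsA.
have HA3 : #|A| = 3.
  by move: (subsetP Hsub A HA); rewrite inE => /andP [/eqP ->].
have Hle : #|[set x in s]| <= #|A|.
  by apply: subset_leq_card; apply/subsetP => y; rewrite inE; apply: HsA.
have Hcs : #|[set x in s]| = size s by rewrite cardsE; apply/card_uniqP.
have Hs3 : size s = 3 by apply/eqP; rewrite eqn_leq H3 -HA3 -Hcs Hle.
split => //; exists A => //.
apply/eqP; rewrite eqEcard Hcs Hs3 HA3 leqnn andbT.
by apply/subsetP => y; rewrite inE; apply: HsA.
Qed.

Lemma edge_mem (T : finType) (s : seq T) u v :
  [set u; v] \in cycle_edges s -> (u \in s) && (v \in s).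
Proof.
case/imsetP => x Hx E.
have Hu : u \in [set x; next s x] by rewrite -E !inE eqxx.
have Hv : v \in [set x; next s x] by rewrite -E !inE eqxx orbT.
move: Hu Hv; rewrite !inE => /orP [] /eqP -> /orP [] /eqP ->;
  by rewrite ?mem_next Hx.
Qed.

Theorem mainTheorem8 (T : finType) (e : rel T) (V' : {set T}) (E' : {set {set T}}) :
  simple_graph e -> chordal e ->
  sub_hypergraph_H e V' E' -> berge_acyclic E' ->
  forall x : T, x \in GE_vertices E' ->
    let F := component (GE_vertices E') (GE_adj E') x in
    cactus F (GE_adj E') /\
    (forall s : seq T, is_cycle F (GE_adj E') s -> size s = 3).
Proof.
move=> _ _ Hsub HB x Hx F.
set V := GE_vertices E'; set r := GE_adj E'.
have Hsym : symmetric r.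
  move=> u v; rewrite /r /GE_adj eq_sym; congr andb.
  by apply/existsP/existsP => [] [A /andP [HA /andP [H1 H2]]]; exists A; rewrite HA H1 H2.
split; last by move=> s Hs; case: (cyc3 Hsub HB Hs).
split.
  have HxF : x \in F by rewrite /F /component inE Hx connect0.
  have Hpath : forall p w, w \in F -> path (restr V r) w p -> path (restr F r) w p.
    elim=> [|z p IH] w Hw //= /andP [Hwz Hp].
    have HzF : z \in F.
      rewrite /F /component inE; case/and3P: (Hwz) => _ -> _ /=.
      apply: connect_trans (connect1 Hwz).
      by move: Hw; rewrite /F /component inE => /andP [_].
    by rewrite /restr Hw HzF /=; case/and3P: Hwz => _ _ ->; rewrite IH.
  have Hcx : forall y, y \in F -> connect (restr F r) x y.
    move=> y; rewrite /F /component inE => /andP [_ /connectP [p Hp ->]].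
    by apply/connectP; exists p => //; apply: Hpath.
  have HsymF : symmetric (restr F r).
    by move=> u v; rewrite /restr Hsym andbCA.
  move=> y z Hy Hz; apply: connect_trans (Hcx z Hz).
  by rewrite (sym_connect_sym HsymF); apply: Hcx.
move=> u v s1 s2 Hu Hv Huv Hs1 Hs2 He1 He2.
case: (cyc3 Hsub HB Hs1) => S1 [A1 HA1 E1].
case: (cyc3 Hsub HB Hs2) => S2 [A2 HA2 E2].
have Hnuv : u != v by case/andP: Huv.
case/andP: (edge_mem He1) => Hu1 Hv1.
case/andP: (edge_mem He2) => Hu2 Hv2.
have E12 : A1 = A2.
  apply/eqP; apply/negP => /negP HA12; apply: (HB [:: A1; A2] [:: u; v]).
  split; first by rewrite /= !inE HA12 Hnuv.
  split; first by rewrite /= HA1 HA2.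
  move=> [|[|i]] x0 //= _; rewrite -E1 -E2 !inE; by [rewrite Hu1 Hu2 | rewrite Hv1 Hv2].
case/and4P: Hs1 => Hu1' _ _ _; case/and4P: Hs2 => Hu2' _ _ _.
by rewrite (edges3 Hu1' S1) (edges3 Hu2' S2) E1 E2 E12.
Qed.
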